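(* Let $n \ge 3$ be odd, let $f \in S_{1,1}(n)$ and let $g \in S_{0,0}(n)$. Then: (i) $\psi(f) \in S_{0,0}(n)$ if $\sigma_f = 1$, and $\psi(f) \in S_{0,1}(n)$ if $\sigma_f = 0$; (ii) $\psi^{-1}(f) \in S_{0,0}(n)$ if $\sigma_f = 0$, and $\psi^{-1}(f) \in S_{1,0}(n)$ if $\sigma_f = 1$; (iii) $\psi(g) \in S_{1,1}(n)$ if $\sigma_g = 1$, and $\psi(g) \in S_{1,0}(n)$ if $\sigma_g = 0$; (iv) $\psi^{-1}(g) \in S_{1,1}(n)$ if $\sigma_g = 0$, and $\psi^{-1}(g) \in S_{0,1}(n)$ if $\sigma_g = 1$.
   Context: For $n \ge 2$, let $\mathcal{I}_n$ be the set of all irreducible polynomials of degree $n$ in $\mathbb{F}_2[x]$. Every $f \in \mathcal{I}_n$ is monic with constant term $1$; write $f = x^n + f_{n-1}x^{n-1} + \cdots + f_1 x + 1$ with $f_k \in \mathbb{F}_2$. For $i,j \in \mathbb{F}_2$, $S_{i,j}(n)$ denotes the set of $f \in \mathcal{I}_n$ with $f_{n-1} = i$ and $f_1 = j$. Define $\psi : \mathcal{I}_n \to \mathcal{I}_n$ by $\psi(f)(x) = (x+1)^n f\!\left(\frac{1}{x+1}\right)$, with inverse $\psi^{-1}(f)(x) = x^n f\!\left(\frac{x+1}{x}\right)$. The signature of $f \in \mathcal{I}_n$ is $\sigma_f = \sum_{k=2}^{n-2} k f_k \pmod 2 \in \mathbb{F}_2$. *)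

(* Defs.v *)
From mathcomp Require Import all_boot all_algebra.
Set Implicit Arguments. Unset Strict Implicit. Unset Printing Implicit Defensive.
Import GRing.Theory.
Local Open Scope ring_scope.

Notation F2 := 'F_2.

Definition irredn (n : nat) (f : {poly F2}) : Prop :=
  [/\ irreducible_poly f, size f = n.+1 & f \is monic].

Definition S_ij (i j : F2) (n : nat) (f : {poly F2}) : Prop :=
  irredn n f /\ f`_(n.-1) = i /\ f`_1 = j.

(* psi(f)(x) = (x+1)^n f(1/(x+1)) = sum_k f_k (x+1)^(n-k) *)
Definition psi (n : nat) (f : {poly F2}) : {poly F2} :=
  \sum_(k < n.+1) f`_k *: ('X + 1) ^+ (n - k).

(* psi^{-1}(f)(x) = x^n f((x+1)/x) = sum_k f_k (x+1)^k x^(n-k) *)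
Definition psi_inv (n : nat) (f : {poly F2}) : {poly F2} :=
  \sum_(k < n.+1) f`_k *: (('X + 1) ^+ k * 'X ^+ (n - k)).

Definition sigma (n : nat) (f : {poly F2}) : F2 :=
  \sum_(2 <= k < n.-1) f`_k *+ k.

(* Main.v *)
Require Import Defs.
From mathcomp Require Import all_boot all_algebra zify ring.
Import GRing.Theory.
Local Open Scope ring_scope.

Lemma F2_cases (x : 'F_2) : x = 0 \/ x = 1.
Proof. case: x => [[|[|k]] Hk]; [left|right|]; try exact/val_inj. done. Qed.
Lemma F2_11 : (1 + 1 : 'F_2) = 0. Proof. exact/val_inj. Qed.
Lemma F2_opp (x : 'F_2) : - x = x.
Proof. by case: (F2_cases x) => ->; [rewrite oppr0| exact/val_inj]. Qed.
Lemma F2_nat m : (m%:R : 'F_2) = (odd m)%:R.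
Proof. elim: m => // m IH. rewrite -natr1 IH /=; case: (odd m) => /=. exact: F2_11. by rewrite add0r. Qed.
Lemma F2_neq0 (x : 'F_2) : x != 0 -> x = 1.
Proof. by case: (F2_cases x) => ->; rewrite ?eqxx. Qed.

Implicit Types p q f g : {poly 'F_2}.
Definition rv (m : nat) (p : {poly 'F_2}) : {poly 'F_2} := \poly_(i < m.+1) p`_(m - i).

Lemma coef_rv m p k : (rv m p)`_k = if (k <= m)%N then p`_(m - k) else 0.
Proof. by rewrite coef_poly ltnS. Qed.

Lemma rvD m p q : rv m (p + q) = rv m p + rv m q.
Proof. apply/polyP => k; rewrite coefD !coef_rv coefD; by case: ifP; rewrite ?addr0. Qed.
Lemma rv0 m : rv m 0 = 0.
Proof. apply/polyP => k; rewrite coef_rv; case: ifP => _; by rewrite ?coef0. Qed.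
Lemma rvZ m c p : rv m (c *: p) = c *: rv m p.
Proof. apply/polyP => k; rewrite coefZ !coef_rv; case: ifP; by rewrite ?coefZ ?mulr0. Qed.
Lemma rv_sum m (I : Type) (r : seq I) (P : pred I) (F : I -> {poly 'F_2}) :
  rv m (\sum_(i <- r | P i) F i) = \sum_(i <- r | P i) rv m (F i).
Proof. exact: (big_morph (rv m) (rvD m) (rv0 m)). Qed.

Lemma rv_XnM a b i q : (i <= a)%N -> (size q <= b.+1)%N ->
  rv (a + b) ('X^i * q) = 'X^(a - i) * rv b q.
Proof.
move=> ia sq; apply/polyP => k; rewrite coef_rv !coefXnM coef_rv.
case: (ltnP k (a - i)) => h1.
  have -> : (k <= a + b)%N by lia.
  have -> : (a + b - k < i)%N = false by lia.
  apply: nth_default; apply: leq_trans sq _; lia.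
case: (leqP (k - (a - i)) b) => h2.
  have -> : (k <= a + b)%N by lia.
  have -> : (a + b - k < i)%N = false by lia.
  congr (_`_ _); lia.
case: (leqP k (a + b)) => // h3.
by have -> : (a + b - k < i)%N by lia.
Qed.

Lemma poly_sumE a p : (size p <= a.+1)%N -> p = \sum_(i < a.+1) p`_i *: 'X^i.
Proof.
move=> sp; rewrite -poly_def; apply/polyP => k; rewrite coef_poly.
case: ltnP => // h; apply: nth_default; apply: leq_trans sp _; lia.
Qed.

Arguments poly_sumE {a p}.
Lemma rv0_1 : rv 0 1 = 1.
Proof. apply/polyP => k; case: k => [|k]; by rewrite coef_rv !coef1. Qed.

Lemma rv_Xn a i : (i <= a)%N -> rv a 'X^i = 'X^(a - i).
Proof.
move=> ia; have := @rv_XnM a 0 i 1 ia; rewrite addn0 !mulr1 rv0_1 mulr1; apply.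
by rewrite size_poly1.
Qed.

Lemma rv_sumE a p : (size p <= a.+1)%N -> rv a p = \sum_(i < a.+1) p`_i *: 'X^(a - i).
Proof.
move=> sp; rewrite {1}(poly_sumE sp) rv_sum; apply: eq_bigr => i _.
by rewrite rvZ rv_Xn // -ltnS.
Qed.

Arguments rv_sumE {a p}.
Lemma rv_M a b p q : (size p <= a.+1)%N -> (size q <= b.+1)%N ->
  rv (a + b) (p * q) = rv a p * rv b q.
Proof.
move=> sp sq; rewrite {1}(poly_sumE sp) big_distrl /= rv_sum (rv_sumE sp) big_distrl /=.
apply: eq_bigr => i _; rewrite -scalerAl rvZ rv_XnM ?scalerAl //.
by rewrite -ltnS.
Qed.

Arguments rv_M {a b p q}.
Lemma rvK m p : (size p <= m.+1)%N -> rv m (rv m p) = p.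
Proof.
move=> sp; apply/polyP => k; rewrite !coef_rv.
case: leqP => h. rewrite leq_subr. congr (_`_ _); lia.
symmetry; apply: nth_default; apply: leq_trans sp _; lia.
Qed.

Lemma size_rv m p : p`_0 != 0 -> size (rv m p) = m.+1.
Proof. by move=> h; rewrite size_poly_eq //= subnn. Qed.

Lemma lead_rv m p : p`_0 != 0 -> lead_coef (rv m p) = p`_0.
Proof. by move=> h; rewrite lead_coefE size_rv // coef_rv leqnn subnn. Qed.

Lemma size_rv_leq m p : (size (rv m p) <= m.+1)%N.
Proof. exact: size_poly. Qed.

Lemma XaddE : ('X + 1 : {poly 'F_2}) = 'X + (1 : 'F_2)%:P.
Proof. by rewrite polyC1. Qed.

Lemma size_Xadd1 : size ('X + 1 : {poly 'F_2}) = 2.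
Proof. by rewrite XaddE size_XaddC. Qed.

Lemma compKK p : (p \Po ('X + 1)) \Po ('X + 1) = p.
Proof.
have E : ('X + 1 : {poly 'F_2}) = 'X - (1 : 'F_2)%:P by rewrite -polyCN F2_opp polyC1.
rewrite [in X in (_ \Po X)]E XaddE; exact: comp_polyXaddC_K.
Qed.

Lemma eqp_comp p q r : p %= q -> p \Po r %= q \Po r.
Proof. by case/andP => h1 h2; apply/andP; split; apply: dvdp_comp_poly. Qed.

Lemma comp_irr p : irreducible_poly p -> irreducible_poly (p \Po ('X + 1)).
Proof.
move=> irr; split; first by rewrite size_comp_poly2 ?size_Xadd1; case: irr.
move=> q sq qd.
have : q \Po ('X + 1) %= p.
  apply: irr; first by rewrite size_comp_poly2 ?size_Xadd1.
  by rewrite -[p]compKK dvdp_comp_poly.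
by move/(@eqp_comp _ _ ('X + 1)); rewrite compKK.
Qed.

Lemma rv_irr m p : irreducible_poly p -> size p = m.+1 -> p`_0 != 0 ->
  irreducible_poly (rv m p).
Proof.
move=> irr sp p0; split; first by rewrite size_rv // -sp; case: irr.
move=> q sq1 /dvdpP [r hE].
have hnz : rv m p != 0 by rewrite -size_poly_gt0 size_rv.
have rnz : r != 0 by apply: contraNneq hnz => r0; rewrite hE r0 mul0r.
have qnz : q != 0 by apply: contraNneq hnz => q0; rewrite hE q0 mulr0.
have sr : size r = (size r).-1.+1 by rewrite prednK // size_poly_gt0.
have sq : size q = (size q).-1.+1 by rewrite prednK // size_poly_gt0.
set a := (size r).-1 in sr; set b := (size q).-1 in sq.
have mab : m = (a + b)%N.
  have := size_mul rnz qnz; rewrite -hE size_rv // sr sq => [[]]; lia.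
have pE : p = rv a r * rv b q.
  by rewrite -(rv_M (eq_leq sr) (eq_leq sq)) -hE -mab rvK // sp.
have h0 : (rv m p)`_0 != 0.
  rewrite coef_rv leq0n subn0.
  have : lead_coef p != 0 by rewrite lead_coef_eq0 -size_poly_gt0 sp.
  by rewrite lead_coefE sp.
have q0 : q`_0 != 0.
  by apply: contraNneq h0 => q0; rewrite hE coef0M q0 mulr0.
have dv : rv b q %| p by rewrite pE dvdp_mull.
case: (irredp_XsubCP irr dv) => [c1|cp].
  move/eqp_size: c1; rewrite size_rv // size_poly1 => -[b0].
  by move: sq1; rewrite sq b0.
move/eqp_size: cp; rewrite size_rv // sp => -[bm].
have a0 : a = 0%N by lia.
have rE : r = (r`_0)%:P by apply: size1_polyC; rewrite sr a0.
have r0 : r`_0 != 0 by apply: contraNneq rnz => e; rewrite rE e.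
by rewrite hE rE mul_polyC eqp_sym eqp_scale.
Qed.

Lemma comp_Xn j : 'X^j \Po ('X + 1) = ('X + 1 : {poly 'F_2}) ^+ j.
Proof.
elim: j => [|j IH]; first by rewrite !expr0 -polyC1 comp_polyC.
by rewrite !exprS comp_polyM comp_polyX IH.
Qed.

Lemma psi_rv n f : (size f <= n.+1)%N -> psi n f = rv n f \Po ('X + 1).
Proof.
move=> sf; rewrite (rv_sumE sf) /psi linear_sum; apply: eq_bigr => i _.
by rewrite linearZ /= comp_Xn.
Qed.

Lemma XsubE : ('X + 1 : {poly 'F_2}) = 'X - (1 : 'F_2)%:P.
Proof. by rewrite -polyCN F2_opp polyC1. Qed.

Lemma size_Xadd_exp k : size (('X + 1 : {poly 'F_2}) ^+ k) = k.+1.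
Proof. by rewrite XsubE size_exp_XsubC. Qed.

Lemma rv1_Xadd : rv 1 ('X + 1) = 'X + 1.
Proof.
apply/polyP => k; rewrite coef_rv.
by case: k => [|[|k]]; rewrite /= !coefD !coefX !coef1 /= ?addr0 ?add0r.
Qed.

Lemma rv_XaddK k : rv k (('X + 1) ^+ k) = ('X + 1) ^+ k.
Proof.
elim: k => [|k IH]; first by rewrite expr0 rv0_1.
rewrite exprSr -[k.+1]addn1 (rv_M (p := ('X + 1) ^+ k) (q := 'X + 1)) ?IH ?rv1_Xadd //.
  by rewrite size_Xadd_exp.
by rewrite size_Xadd1.
Qed.

Lemma rv_Xadd n i : (i <= n)%N -> rv n (('X + 1) ^+ i) = ('X + 1) ^+ i * 'X^(n - i).
Proof.
move=> i_n.
have := @rv_XnM (n - i) i 0 (('X + 1) ^+ i) (leq0n _).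
rewrite subnK // expr0 mul1r subn0 rv_XaddK mulrC; apply.
by rewrite size_Xadd_exp.
Qed.

Lemma psi_inv_rv n f : (size f <= n.+1)%N -> psi_inv n f = rv n (f \Po ('X + 1)).
Proof.
move=> sf; rewrite {2}(poly_sumE sf) linear_sum rv_sum /psi_inv; apply: eq_bigr => i _.
by rewrite linearZ /= comp_Xn rvZ rv_Xadd // -ltnS.
Qed.

Lemma coef_XD1 k j : (('X + 1 : {poly 'F_2}) ^+ k)`_j = ('C(k, j))%:R.
Proof.
rewrite exprD1n coef_sum.
under eq_bigr => i _ do rewrite coefMn coefXn.
case: (ltnP j k.+1) => h.
  rewrite (bigD1 (Ordinal h)) //= eqxx big1 ?addr0 //.
  move=> i /negPf ne; rewrite eq_sym.
  have -> : (i == j :> nat) = false by apply/negP => /eqP e; move: ne; rewrite -val_eqE /= e eqxx.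
  by rewrite mul0rn.
rewrite bin_small // big1 // => i _.
have -> : (j == i :> nat) = false by apply/negP => /eqP e; have := ltn_ord i; lia.
by rewrite mul0rn.
Qed.

Lemma irr_noroot p c : irreducible_poly p -> (2 < size p)%N -> ~~ root p c.
Proof.
move=> irr s; apply/negP; rewrite root_factor_theorem => d.
have := irr _ _ d; rewrite size_XsubC => /(_ isT) /eqp_size.
by rewrite size_XsubC => e; move: s; rewrite -e.
Qed.

Lemma irr_f0 n f : (3 <= n)%N -> irredn n f -> f`_0 = 1.
Proof.
move=> n3 [irr sf _]; apply: F2_neq0; rewrite -horner_coef0.
have := irr_noroot f 0 irr; rewrite /root sf; apply; lia.
Qed.

Lemma irr_f1 n f : (3 <= n)%N -> irredn n f -> \sum_(k < n.+1) f`_k = 1.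
Proof.
move=> n3 [irr sf _]; have := irr_noroot f 1 irr.
rewrite sf /root horner_coef sf => /(_ ltac:(lia)) /F2_neq0 <-.
by apply: eq_bigr => i _; rewrite expr1n mulr1.
Qed.

Lemma S1 m f : ~~ odd m -> f`_(m.+3) = 1 ->
  \sum_(k < m.+4) f`_k * k%:R = f`_1 + sigma m.+3 f + 1.
Proof.
move=> em fn; rewrite -(big_mkord xpredT (fun k => f`_k * k%:R)).
rewrite big_ltn // big_ltn // big_nat_recr // big_nat_recr //= fn /sigma.
have -> : ((m.+2)%:R : 'F_2) = 0 by rewrite F2_nat /= (negPf em).
have -> : ((m.+3)%:R : 'F_2) = 1 by rewrite F2_nat /= (negPf em).
have -> : \sum_(2 <= i < m.+2) f`_i * i%:R = \sum_(2 <= k < m.+2) f`_k *+ k.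
  by apply: eq_bigr => i _; rewrite mulr_natr.
rewrite mulr0 mulr1 mulr0 addr0 add0r mulr1.
by rewrite addrA.
Qed.

Lemma coef_psi n f j : (psi n f)`_j = \sum_(k < n.+1) f`_k * ('C(n - k, j))%:R.
Proof. by rewrite /psi coef_sum; apply: eq_bigr => k _; rewrite coefZ coef_XD1. Qed.

Lemma coef_psi_inv n f j : (psi_inv n f)`_j =
  \sum_(k < n.+1) f`_k * (if (j < n - k)%N then 0 else ('C(k, j - (n - k)))%:R).
Proof. by rewrite /psi_inv coef_sum; apply: eq_bigr => k _; rewrite coefZ coefMXn coef_XD1. Qed.

Lemma psi_top m f : ~~ odd m -> f`_0 = 1 -> (psi m.+3 f)`_(m.+2) = 1 + f`_1.
Proof.
move=> em f0; rewrite coef_psi big_ord_recl big_ord_recl /= big1.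
  rewrite subn0 binSn f0 mul1r F2_nat /= (negPf em) /=.
  have -> : (m.+3 - 1 = m.+2)%N by lia.
  by rewrite binn mulr1 addr0.
move=> i _; have -> : bump 0 (bump 0 i) = i.+2 by rewrite /bump. rewrite bin_small ?mulr0 //. by rewrite !subSS (leq_ltn_trans (leq_subr _ _)).
Qed.

Lemma F2_xx (x : 'F_2) : x + x = 0.
Proof. by case: (F2_cases x) => ->; rewrite ?addr0 ?F2_11. Qed.

Lemma psi_one m f : ~~ odd m -> irredn m.+3 f ->
  (psi m.+3 f)`_1 = f`_1 + sigma m.+3 f.
Proof.
move=> em irr; have [_ sf mf] := irr.
have fn : f`_(m.+3) = 1.
  by move/monicP: mf; rewrite lead_coefE sf.
rewrite coef_psi.
have -> : \sum_(k < m.+4) f`_k * ('C(m.+3 - k, 1))%:R =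
          \sum_(k < m.+4) (f`_k + f`_k * k%:R).
  apply: eq_bigr => k _; rewrite bin1.
  have -> : ((m.+3 - k)%:R : 'F_2) = 1 + k%:R.
    rewrite (F2_nat (m.+3 - k)) (F2_nat k) oddB; last by have := ltn_ord k; lia.
    rewrite /= (negPf em) /=; case: (odd k) => /=.
      by rewrite F2_11. by rewrite addr0.
  by rewrite mulrDr mulr1.
rewrite big_split /= (@irr_f1 _ f _ irr) // S1 //.
by rewrite addrC -addrA F2_xx addr0.
Qed.

Lemma psi_inv_top m f : ~~ odd m -> irredn m.+3 f ->
  (psi_inv m.+3 f)`_(m.+2) = f`_1 + sigma m.+3 f + 1.
Proof.
move=> em irr; have [_ sf mf] := irr.
have fn : f`_(m.+3) = 1.
  by move/monicP: mf; rewrite lead_coefE sf.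
rewrite coef_psi_inv -S1 //; apply: eq_bigr => -[[|k] hk] _ /=.
  by rewrite subn0 ltnSn mulr0.
have -> : (m.+2 < m.+3 - k.+1)%N = false by rewrite ltnNge subSS leq_subr.
have hk' : (k <= m.+2)%N by move: hk; rewrite !ltnS.
by rewrite subSS subKn // binSn.
Qed.

Lemma psi_inv_one m f : ~~ odd m -> irredn m.+3 f ->
  (psi_inv m.+3 f)`_1 = f`_(m.+2) + 1.
Proof.
move=> em irr; have [_ sf mf] := irr.
have fn : f`_(m.+3) = 1.
  by move/monicP: mf; rewrite lead_coefE sf.
rewrite coef_psi_inv big_ord_recr big_ord_recr /= big1.
  rewrite subnn /= subn0 bin1 fn mul1r.
  have -> : (m.+3 - m.+2 = 1)%N by lia.
  rewrite ltnn subnn bin0 mulr1 add0r.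
  by rewrite F2_nat /= (negPf em).
move=> i _ /=.
have -> : (1 < m.+3 - i)%N by have := ltn_ord i; lia.
by rewrite mulr0.
Qed.

Lemma lead_Xadd1 : lead_coef ('X + 1 : {poly 'F_2}) = 1.
Proof. by rewrite XaddE lead_coefXaddC. Qed.

Lemma psi_irr n f : (3 <= n)%N -> irredn n f -> irredn n (psi n f).
Proof.
move=> n3 irrf; have f0 := @irr_f0 n f n3 irrf; case: irrf => irr sf mf.
have f0' : f`_0 != 0 by rewrite f0 oner_neq0.
rewrite psi_rv ?sf //; split.
- exact/comp_irr/rv_irr.
- by rewrite size_comp_poly2 ?size_Xadd1 // size_rv.
- by apply/monicP; rewrite lead_coef_comp ?size_Xadd1 // lead_Xadd1 expr1n mulr1 lead_rv.
Qed.

Lemma psi_inv_irr n f : (3 <= n)%N -> irredn n f -> irredn n (psi_inv n f).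
Proof.
move=> n3 [irr sf mf].
have F0 : (f \Po ('X + 1))`_0 = 1.
  rewrite -horner_coef0 horner_comp !hornerE; apply: F2_neq0.
  have := @irr_noroot f 1 irr; rewrite /root sf; apply; lia.
have F0' : (f \Po ('X + 1))`_0 != 0 by rewrite F0 oner_neq0.
have sF : size (f \Po ('X + 1)) = n.+1 by rewrite size_comp_poly2 ?size_Xadd1.
rewrite psi_inv_rv ?sf //; split.
- by apply: rv_irr => //; apply: comp_irr.
- by rewrite size_rv.
- by apply/monicP; rewrite lead_rv.
Qed.

Theorem lemma1 (n : nat) (f g : {poly 'F_2}) :
  (3 <= n)%N -> odd n -> S_ij 1 1 n f -> S_ij 0 0 n g ->
  [/\ (sigma n f = 1 -> S_ij 0 0 n (psi n f)) /\
      (sigma n f = 0 -> S_ij 0 1 n (psi n f)),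
      (sigma n f = 0 -> S_ij 0 0 n (psi_inv n f)) /\
      (sigma n f = 1 -> S_ij 1 0 n (psi_inv n f)),
      (sigma n g = 1 -> S_ij 1 1 n (psi n g)) /\
      (sigma n g = 0 -> S_ij 1 0 n (psi n g)) &
      (sigma n g = 0 -> S_ij 1 1 n (psi_inv n g)) /\
      (sigma n g = 1 -> S_ij 0 1 n (psi_inv n g))].
Proof.
case: n => [|[|[|m]]] // n3 on [irrf [ftop f1]] [irrg [gtop g1]].
have em : ~~ odd m by move: on => /=; rewrite !negbK.
move: ftop gtop => /= ftop gtop.
have f0 := @irr_f0 _ f n3 irrf.
have g0 := @irr_f0 _ g n3 irrg.
have Pf := psi_irr _ _ n3 irrf; have Pg := psi_irr _ _ n3 irrg.
have Qf := psi_inv_irr _ _ n3 irrf; have Qg := psi_inv_irr _ _ n3 irrg.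
have Tf := psi_top _ _ em f0; have Tg := psi_top _ _ em g0.
have Of := psi_one _ _ em irrf; have Og := psi_one _ _ em irrg.
have TQf := psi_inv_top _ _ em irrf; have TQg := psi_inv_top _ _ em irrg.
have OQf := psi_inv_one _ _ em irrf; have OQg := psi_inv_one _ _ em irrg.
rewrite f1 in Tf Of TQf; rewrite g1 in Tg Og TQg.
rewrite ftop in OQf; rewrite gtop in OQg.
split; split => s; rewrite /S_ij /=; rewrite s in Of Og TQf TQg;
  (split; [done | split]);
  by rewrite ?Tf ?Tg ?Of ?Og ?TQf ?TQg ?OQf ?OQg ?F2_11 ?addr0 ?add0r ?F2_11.
Qed.
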